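(* Let $\psi$ satisfy $0<c_\psi\le\psi(X_i,Y_j)\le C_\psi$ for all $i,j$. Then for each $i$ the cell problem has a unique solution $\chi(X_i,\cdot)\in U^p_\#(\mathbb Z)$. Moreover $\chi(X_{i+N},Y_j)=\chi(X_i,Y_j)$ for all $i,j$, i.e. $\chi\in U^N_{\rm per}(\epsilon\mathbb Z)\otimes U^p_\#(\mathbb Z)$.
   Context: Let $\epsilon>0$ and $N,p$ positive integers; $X_i=\epsilon i$, $Y_j=j$. $U^p_\#(\mathbb Z)$ is the space of $p$-periodic functions $s:\mathbb Z\to\mathbb R$ with $\sum_{j=1}^ps(Y_j)=0$. $\psi:\epsilon\mathbb Z\times\mathbb Z\to\mathbb R$ satisfies $\psi(X_{i+N},Y_j)=\psi(X_i,Y_j)=\psi(X_i,Y_{j+p})$. For a function $g$ of $(X_i,Y_j)$, $D_Yg(X_i,Y_j)=g(X_i,Y_{j+1})-g(X_i,Y_j)$. The cell problem at $X_i$: find a $p$-periodic function $\chi(X_i,\cdot)$ on $\mathbb Z$ with $\frac1p\sum_{j=1}^p\chi(X_i,Y_j)=0$ and $-D_Y(\psi D_Y\chi)(X_i,Y_j)=D_Y\psi(X_i,Y_j)$ for all $j\in\mathbb Z$. *)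

(* Defs.v *)
From HB Require Import structures.
From mathcomp Require Import all_boot all_order all_algebra.
Set Implicit Arguments. Unset Strict Implicit. Unset Printing Implicit Defensive.
Import Order.TTheory GRing.Theory Num.Theory.
Local Open Scope ring_scope.

Definition Xg (R : realFieldType) (eps : R) (i : int) : R := eps * i%:~R.
Definition Yg (R : realFieldType) (j : int) : R := j%:~R.

Definition DY (R : realFieldType) (g : int -> int -> R) (i j : int) : R :=
  g i (j + 1)%R - g i j.

Definition psig (R : realFieldType) (eps : R) (psi : R -> R -> R)
  (i j : int) : R := psi (Xg eps i) (Yg R j).

(* s : Z -> R is a solution of the cell problem at X_i:
   s is p-periodic, (1/p) sum_{j=1}^p s(Y_j) = 0, and
   - D_Y (psi D_Y chi)(X_i, Y_j) = D_Y psi (X_i, Y_j) for all j,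
   where chi(X_i, .) = s. *)
Definition cell_solution (R : realFieldType) (eps : R) (p : nat)
  (psi : R -> R -> R) (i : int) (s : int -> R) : Prop :=
  (forall j : int, s (j + p%:Z)%R = s j) /\
  (p%:R^-1 * \sum_(1 <= j < p.+1) s j%:Z = 0) /\
  (forall j : int,
     - DY (fun i' j' => psig eps psi i' j' * DY (fun _ j'' => s j'') i' j') i j
     = DY (psig eps psi) i j).

(* Main.v *)
From HB Require Import structures.
Require Import Defs.
From mathcomp Require Import all_boot all_order all_algebra.
From mathcomp Require Import zify ring lra.
Import Order.TTheory GRing.Theory Num.Theory.
Set Implicit Arguments. Unset Strict Implicit.
Local Open Scope ring_scope.
Lemma const_int (R : Type) (g : int -> R) :
  (forall j, g (j + 1) = g j) -> forall j, g j = g 0.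
Proof.
move=> H.
have Hp : forall n : nat, g n%:Z = g 0.
  elim=> [|n IH] //; rewrite -IH -(H n); congr g; lia.
have Hn : forall n : nat, g (- n%:Z) = g 0.
  elim=> [|n IH] //; rewrite -IH -(H (- n.+1%:Z)); congr g; lia.
by case=> n; [exact: Hp| rewrite NegzE; exact: Hn].
Qed.

Lemma per_mod (R : Type) (p : nat) (h : int -> R) : (0 < p)%N ->
  (forall j, h (j + p%:Z) = h j) -> forall j, h j = h (j %% p%:Z)%Z.
Proof.
move=> p0 H j.
have Hp : forall (n : nat) x, h (x + n%:Z * p%:Z) = h x.
  elim=> [|n IH] x; first by rewrite mul0r addr0.
  have := H (x + n%:Z * p%:Z); rewrite IH => <-; congr h; lia.
have Hn : forall (n : nat) x, h (x - n%:Z * p%:Z) = h x.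
  move=> n x; rewrite -(Hp n (x - n%:Z * p%:Z)); congr h; lia.
rewrite {1}(divz_eq j p%:Z) addrC.
case: (j %/ p%:Z)%Z => n; first exact: Hp.
rewrite NegzE mulNr; exact: Hn.
Qed.
Section S.
Variable R : realFieldType.
Variable p : nat.
Hypothesis p0 : (0 < p)%N.
Variable a : int -> R.
Hypothesis apos : forall j, 0 < a j.
Hypothesis aper : forall j, a (j + p%:Z) = a j.

Definition S := \sum_(k < p) (a k%:Z)^-1.
Definition Cst := p%:R / S.
Definition dd (k : int) := Cst / a k - 1.
Definition T (r : nat) := \sum_(k < r) dd k%:Z.
Definition sol0 (j : int) := T `|(j %% p%:Z)%Z|%N.
Definition solm (j : int) :=
  sol0 j - p%:R^-1 * \sum_(1 <= k < p.+1) sol0 k%:Z.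

Lemma S_gt0 : 0 < S.
Proof.
rewrite /S; case: p p0 => // n _.
rewrite big_ord_recr /=; apply: ltr_wpDl.
  by apply: sumr_ge0 => i _; rewrite invr_ge0 ltW.
by rewrite invr_gt0.
Qed.

Lemma sum_dd : \sum_(k < p) dd k%:Z = Cst * S - p%:R.
Proof.
rewrite /dd sumrB mulr_sumr; congr (_ - _).
by rewrite sumr_const card_ord.
Qed.

Lemma Tp : T p = 0.
Proof.
rewrite /T sum_dd /Cst mulrVK ?subrr //.
by rewrite unitfE gt_eqF // S_gt0.
Qed.

Lemma Dsol0 j : sol0 (j + 1) - sol0 j = dd j.
Proof.
set r := `|(j %% p%:Z)%Z|%N.
have hr : (j %% p%:Z)%Z = r%:Z by rewrite gez0_abs // modz_ge0 //; lia.
have rp : (r < p)%N.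
  by have := @ltz_pmod j p%:Z; rewrite hr !ltz_nat; apply.
have ha : a j = a r%:Z by rewrite (per_mod p0 aper) hr.
rewrite /dd ha /sol0 -/r.
have -> : ((j + 1) %% p%:Z)%Z = ((r%:Z + 1) %% p%:Z)%Z by rewrite -hr modzDml.
case: (ltnP r.+1 p) => hrp.
  rewrite modz_small; last by apply/andP; split; lia.
  have -> : absz (r%:Z + 1)%R = r.+1 by lia.
  by rewrite /T big_ord_recr /= addrAC subrr add0r.
have er : r.+1 = p by lia.
have -> : (r%:Z + 1) = p%:Z by lia.
rewrite modzz /=.
have := Tp; rewrite -er /T big_ord_recr /= => H.
move: H; rewrite big_ord0 -/(dd r%:Z); lra.
Qed.

Definition EQ (s : int -> R) := forall j,
  - (a (j + 1) * (s (j + 1 + 1) - s (j + 1)) - a j * (s (j + 1) - s j))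
  = a (j + 1) - a j.

Lemma diff_EQ (s : int -> R) : (forall j, s (j + 1) - s j = dd j) -> EQ s.
Proof.
move=> H j; rewrite !H /dd.
have h1 := apos j; have h2 := apos (j + 1).
field; rewrite ?gt_eqF //.
Qed.

Lemma solm_diff j : solm (j + 1) - solm j = dd j.
Proof. rewrite /solm -Dsol0; ring. Qed.

Lemma solm_per j : solm (j + p%:Z) = solm j.
Proof. by rewrite /solm /sol0 modzDr. Qed.

Lemma solm_mean : p%:R^-1 * \sum_(1 <= k < p.+1) solm k%:Z = 0.
Proof.
rewrite /solm sumrB sumr_const_nat subSS subn0 -mulr_natr.
have : p%:R != 0 :> R by rewrite pnatr_eq0 -lt0n.
move=> hp; field; exact: hp.
Qed.

Lemma EQ_diff (s : int -> R) : (forall j, s (j + p%:Z) = s j) -> EQ s ->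
  forall j, s (j + 1) - s j = dd j.
Proof.
move=> sper H.
pose f j := a j * (s (j + 1) - s j) + a j.
have fc : forall j, f (j + 1) = f j.
  move=> j; have := H j; rewrite /f; lra.
have fK := const_int fc.
have Hdf : forall j, s (j + 1) - s j = f 0 / a j - 1.
  move=> j; rewrite -(fK j) /f; have h := apos j; field; by rewrite gt_eqF.
have tel : \sum_(k < p) (s (k.+1)%:Z - s k%:Z) = 0.
  rewrite -(big_mkord xpredT (fun k => s (k.+1)%:Z - s k%:Z)).
  rewrite telescope_sumr // -[p%:Z]add0r sper subrr //.
have : f 0 * S - p%:R = 0.
  have <- : \sum_(k < p) (f 0 / a k%:Z - 1) = f 0 * S - p%:R.
    by rewrite sumrB mulr_sumr sumr_const card_ord.
  rewrite -[RHS]tel. apply: eq_bigr => k _; have := Hdf k%:Z.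
  have -> : (k.+1)%:Z = k%:Z + 1 by lia.
  by move=> ->.
move=> hS j; rewrite Hdf /dd /Cst.
have Sp := S_gt0.
have -> : f 0 = p%:R / S.
  apply: (mulIf (x := S)); first by rewrite gt_eqF.
  rewrite mulfVK ?gt_eqF //; lra.
done.
Qed.

Lemma uniq_sol (s : int -> R) : (forall j, s (j + p%:Z) = s j) -> EQ s ->
  p%:R^-1 * \sum_(1 <= k < p.+1) s k%:Z = 0 -> forall j, s j = solm j.
Proof.
move=> sper H hm.
pose g j := s j - solm j.
have gc : forall j, g (j + 1) = g j.
  move=> j; have := EQ_diff sper H j; have := solm_diff j; rewrite /g; lra.
have gK := const_int gc.
have : p%:R^-1 * \sum_(1 <= k < p.+1) g k%:Z = 0.
  by rewrite /g sumrB mulrBr hm solm_mean subrr.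
under eq_bigr do rewrite gK.
rewrite sumr_const_nat subSS subn0.
have hp : p%:R != 0 :> R by rewrite pnatr_eq0 -lt0n.
move=> h0 j; apply/eqP; rewrite -subr_eq0 -/(g j) gK.
apply/eqP; move: h0 => /eqP; rewrite mulf_eq0 invr_eq0 (negbTE hp) /= -mulr_natr mulf_eq0 (negbTE hp) orbF. by move/eqP.
Qed.

End S.

Theorem proposition4p2 (R : realFieldType) (eps : R) (N p : nat)
  (psi : R -> R -> R) (c_psi C_psi : R) :
  0 < eps -> (0 < N)%N -> (0 < p)%N ->
  (forall i j : int,
     psi (Xg eps (i + N%:Z)) (Yg R j) = psi (Xg eps i) (Yg R j) /\
     psi (Xg eps i) (Yg R j) = psi (Xg eps i) (Yg R (j + p%:Z))) ->
  0 < c_psi ->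
  (forall i j : int,
     c_psi <= psi (Xg eps i) (Yg R j) /\ psi (Xg eps i) (Yg R j) <= C_psi) ->
  exists chi : int -> int -> R,
    (forall i : int, cell_solution eps p psi i (chi i)) /\
    (forall (i : int) (s : int -> R),
       cell_solution eps p psi i s -> forall j : int, s j = chi i j) /\
    (forall i j : int, chi (i + N%:Z) j = chi i j).
Proof.
move=> _ _ p0 Hper c0 Hb.
have apos : forall i j, 0 < psig eps psi i j.
  by move=> i j; rewrite /psig; apply: lt_le_trans c0 (proj1 (Hb i j)).
have aper : forall i j, psig eps psi i (j + p%:Z) = psig eps psi i j.
  by move=> i j; rewrite /psig (proj2 (Hper i j)).
have uq : forall (i : int) (s : int -> R),
    cell_solution eps p psi i s -> forall j : int, s j = solm p (psig eps psi i) j.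
  move=> i s [sp [sm se]].
  exact: (uniq_sol p0 (apos i) (aper i) sp se sm).
exists (fun i => solm p (psig eps psi i)); split; last split.
- move=> i; split; first exact: solm_per.
  split; first exact: solm_mean.
  exact: (diff_EQ (apos i) (solm_diff p0 (apos i) (aper i))).
- exact: uq.
- move=> i j; apply: uq => {j}.
  have hN : forall j, psig eps psi (i + N%:Z) j = psig eps psi i j.
    by move=> j; rewrite /psig (proj1 (Hper i j)).
  split; first exact: solm_per.
  split; first exact: solm_mean.
  move=> j; have := diff_EQ (apos (i + N%:Z)) (solm_diff p0 (apos _) (aper _)) j.
  rewrite !hN.
  by rewrite /DY.
Qed.
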